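(* Let $f(x,y)=x^2y$. If $\{x^2y : x,y\in\widetilde C\} = [\tfrac{8}{27},1]$, then $\{x^2y : x,y\in C\} = [0,1]$.
   Context: $C=\{\sum_{k\ge1}\alpha_k3^{-k}:\alpha_k\in\{0,2\}\}$ is the middle-thirds Cantor set, and $\widetilde C = C\cap[\tfrac23,1]$. *)

(* Defs.v *)
From Stdlib Require Import Reals.
From Coquelicot Require Import Coquelicot.
Open Scope R_scope.

(* Middle-thirds Cantor set: x = sum_{k>=1} alpha_k 3^{-k}, alpha_k in {0,2}.
   Index shift: the n-th term (n >= 0) is alpha_{n+1} / 3^(n+1). *)
Definition cantor (x : R) : Prop :=
  exists alpha : nat -> R,
    (forall n, alpha n = 0 \/ alpha n = 2) /\
    is_series (fun n => alpha n / 3 ^ (S n)) x.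

Definition cantor_tilde (x : R) : Prop := cantor x /\ 2/3 <= x <= 1.

Definition img_x2y (A : R -> Prop) (z : R) : Prop :=
  exists x y, A x /\ A y /\ z = x ^ 2 * y.

(* Main.v *)
Require Import Defs.
From Stdlib Require Import Reals Lra Psatz ZArith ssreflect.
From Coquelicot Require Import Coquelicot.
Open Scope R_scope.

Lemma geom_b : is_series (fun n => 2 / 3 ^ (S n)) 1.
Proof.
  have H := is_series_geom (1/3).
  assert (Rabs (1/3) < 1) by (rewrite Rabs_right; lra).
  specialize (H H0).
  apply is_series_scal_r with (c := 2/3) in H.
  replace 1 with (/ (1 - 1/3) * (2/3)) by field.
  apply: is_series_ext H => n.
  rewrite /= /Rdiv Rmult_1_l pow_inv. field.
  apply pow_nonzero; lra.
Qed.

Lemma zero_series (a : nat -> R) l : is_series a l -> is_series (fun _ => 0) 0.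
Proof.
  move=> H. apply is_series_scal_r with (c := 0) in H.
  have E : l * 0 = 0 by ring. rewrite E in H.
  eapply is_series_ext; last exact H. move=> n /=. ring.
Qed.

Lemma cantor_bounds x : cantor x -> 0 <= x <= 1.
Proof.
  move=> [al [Hal Hs]].
  have Hp : forall n, 0 <= al n / 3 ^ S n <= 2 / 3 ^ S n.
  { move=> n. have Hp3 : 0 < 3 ^ S n by apply pow_lt; lra.
    have Hi := Rinv_0_lt_compat _ Hp3. rewrite /Rdiv.
    case: (Hal n) => ->; nra. }
  have Hx := is_series_unique _ _ Hs.
  split.
  - have Hz := zero_series _ _ Hs.
    have := Series_le (fun _ => 0) _ (fun n => conj (Rle_refl 0) (proj1 (Hp n))) (ex_intro _ x Hs).
    rewrite (is_series_unique _ _ Hz) Hx //.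
  - have := Series_le _ _ Hp (ex_intro _ 1 geom_b).
    rewrite Hx (is_series_unique _ _ geom_b) //.
Qed.

Lemma cantor0 : cantor 0.
Proof.
  exists (fun _ => 0). split; first by left.
  have H := zero_series _ _ geom_b. eapply is_series_ext; last exact H. move=> n /=. unfold Rdiv; ring.

Qed.

Lemma cantor_div3 y : cantor y -> cantor (y / 3).
Proof.
  move=> [al [Hal Hs]].
  exists (fun n => match n with O => 0 | S m => al m end). split.
  - case=> [|m]; [by left | exact: Hal].
  - apply is_series_decr_1.
    apply is_series_scal_r with (c := /3) in Hs.
    replace (plus _ _) with (y * /3).
    2: { rewrite /plus /opp /=. field. }
    eapply is_series_ext; last exact Hs. move=> n /=. field.
    all: try (apply pow_nonzero; lra).
Qed.

Lemma pow3_ge n : INR n + 1 <= 3 ^ n.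
Proof.
  elim: n => [|n IH]; first (simpl; lra).
  rewrite S_INR /=. have H3 : 0 <= 3 ^ n by apply pow_le; lra. have := pos_INR n. lra.
Qed.

Theorem lemma3p3 :
  (forall z, img_x2y cantor_tilde z <-> 8/27 <= z <= 1) ->
  (forall z, img_x2y cantor z <-> 0 <= z <= 1).
Proof.
  move=> Hyp z. split.
  - move=> [x [y [Hx [Hy ->]]]].
    have := cantor_bounds _ Hx. have := cantor_bounds _ Hy. move=> [? ?] [? ?].
    split; first by apply Rmult_le_pos; [apply pow2_ge_0 | lra].
    have : x ^ 2 <= 1 by simpl; nra.
    have := pow2_ge_0 x. nra.
  - have key : forall n z, 8/27 / 3 ^ n <= z <= 1 -> img_x2y cantor z.
    { elim=> [|n IH] w Hw.
      - simpl in Hw. have [x [y [[Hx _] [[Hy _] E]]]] := proj2 (Hyp w) ltac:(lra).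
        by exists x, y.
      - have Hp := pow_lt 3 n ltac:(lra).
        have E : 8/27 / 3 ^ S n = (8/27/3^n) / 3 by simpl; field; lra.
        case: (Rle_lt_dec (8/27/3^n) w) => Hc.
        + apply IH; lra.
        + have Hq : 8/27/3^n <= 3 * w <= 1.
          { split. rewrite E in Hw. lra.
            have : 8/27/3^n <= 8/27.
            { unfold Rdiv. rewrite -> Rmult_assoc. 
              have := pow3_ge n. move=> ?.
              have : / 3 ^ n <= 1.
              { rewrite <- Rinv_1. apply Rinv_le_contravar; [lra|]. 
                have := pos_INR n. lra. }
              have := Rinv_0_lt_compat _ Hp. nra. }
            lra. }
          have [x [y [Hx [Hy E2]]]] := IH _ Hq.
          exists x, (y / 3). split; [done | split; [by apply cantor_div3 | ]].
          lra. }
    move=> [Hz0 Hz1].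
    case: (Req_dec z 0) => Hz.
    + exists 0, 0. split; [exact cantor0 | split; [exact cantor0 | rewrite Hz; ring]].
    + have [Hup _] := archimed (/ z).
      have Hzp : 0 < z by lra.
      have Hn : 0 <= IZR (up (/ z)) by have := Rinv_0_lt_compat _ Hzp; lra.
      apply (key (Z.to_nat (up (/ z)))). split; last lra.
      have Hi := pow3_ge (Z.to_nat (up (/z))).
      rewrite INR_IZR_INZ Z2Nat.id in Hi; last by apply le_IZR.
      have H3 : 0 < 3 ^ Z.to_nat (up (/ z)) by apply pow_lt; lra.
      apply (Rmult_le_reg_r (3 ^ Z.to_nat (up (/ z)))) => //.
      unfold Rdiv. rewrite Rmult_assoc Rinv_l; last lra.
      have : / z * z = 1 by field; lra.
      nra.
Qed.
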